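(* Let $q=2^h$, let $\alpha\in{\rm GF}(q)$ be such that $X^2+X+\alpha$ is irreducible over ${\rm GF}(q)$, and let $G=\{M_{a,b,c,d}: a\in{\rm GF}(q)\setminus\{0\},\ b,c,d\in{\rm GF}(q),\ c^2+cd+\alpha d^2=1\}$, where $$M_{a,b,c,d}=\begin{pmatrix}1&0&0&0&0\\0&ac&\alpha ad&bc&\alpha bd\\0&ad&a(c+d)&bd&b(c+d)\\0&0&0&a^{-1}c&\alpha a^{-1}d\\0&0&0&a^{-1}d&a^{-1}(c+d)\end{pmatrix},$$ acting on the points (column vectors) of ${\rm PG}(4,q)$ by left multiplication. Then, under the action of $G$ on the lines of ${\rm PG}(4,q)$, there are $q^2-q$ distinct line-orbits of size $q^3-q$, each consisting of pairwise disjoint lines. *)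

(* Defs.v *)
From HB Require Import structures.
From mathcomp Require Import all_boot all_order all_algebra all_fingroup all_field.
Set Implicit Arguments. Unset Strict Implicit. Unset Printing Implicit Defensive.
Import Order.TTheory GRing.Theory.
Local Open Scope ring_scope.

Section Defs.
Variable F : finFieldType.

Definition Mabcd (alpha a b c d : F) : 'M[F]_5 :=
  \matrix_(i < 5, j < 5)
    (nth [::]
      [:: [:: 1; 0; 0; 0; 0];
          [:: 0; a * c; alpha * a * d; b * c; alpha * b * d];
          [:: 0; a * d; a * (c + d); b * d; b * (c + d)];
          [:: 0; 0; 0; a^-1 * c; alpha * a^-1 * d];
          [:: 0; 0; 0; a^-1 * d; a^-1 * (c + d)] ] i)`_j.

Definition Ggroup (alpha : F) : {set 'M[F]_5} :=
  [set M | [exists a : F, exists b : F, exists c : F, exists d : F,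
     [&& a != 0, c ^+ 2 + c * d + alpha * d ^+ 2 == 1 & M == Mabcd alpha a b c d]]].

(* A line of PG(4,q), represented by the 2-dimensional subspace of F^5
   (column vectors) whose nonzero vectors are the points of the line. *)
Definition is_line (S : {set 'cV[F]_5}) : Prop :=
  exists u v : 'cV[F]_5, \rank (row_mx u v) = 2%N /\
    S = [set a *: u + b *: v | a : F, b : F].

Definition act_line (M : 'M[F]_5) (S : {set 'cV[F]_5}) : {set 'cV[F]_5} :=
  [set M *m x | x in S].

Definition line_orbit (G : {set 'M[F]_5}) (S : {set 'cV[F]_5}) :
  {set {set 'cV[F]_5}} := [set act_line M S | M in G].

(* Two lines of PG(4,q) are disjoint iff the subspaces meet only in 0. *)
Definition disjoint_lines (S T : {set 'cV[F]_5}) : Prop :=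
  S :&: T = [set 0].

End Defs.

(* Main.v *)
Require Import Defs.
From HB Require Import structures.
From mathcomp Require Import all_boot all_order all_algebra all_fingroup all_field.
From mathcomp Require Import ring zify.
Set Implicit Arguments. Unset Strict Implicit.
Import GRing.Theory.
Local Open Scope ring_scope.
Lemma char2 (F : finFieldType) (h : nat) : #|F| = (2 ^ h)%N -> (2%:R : F) = 0.
Proof.
move=> hF; have := card_finPcharP hF (isT : prime 2).
by move/pcharf0.
Qed.

Definition mkv (F : finFieldType) (x0 x1 x2 x3 x4 : F) : 'cV[F]_5 :=
  \col_(i < 5) nth 0 [:: x0; x1; x2; x3; x4] i.

Lemma mulM (F : finFieldType) (alpha a b c d x0 x1 x2 x3 x4 : F) :
  Mabcd alpha a b c d *m mkv x0 x1 x2 x3 x4 =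
  mkv x0 (a*c*x1 + alpha*a*d*x2 + b*c*x3 + alpha*b*d*x4)
         (a*d*x1 + a*(c+d)*x2 + b*d*x3 + b*(c+d)*x4)
         (a^-1*c*x3 + alpha*a^-1*d*x4)
         (a^-1*d*x3 + a^-1*(c+d)*x4).
Proof.
apply/matrixP => i j; rewrite !mxE !big_ord_recl big_ord0 !mxE /=.
case: i => [[|[|[|[|[|i]]]]] Hi] //=; ring.
Qed.

Lemma mkv_inj (F : finFieldType) (a0 a1 a2 a3 a4 b0 b1 b2 b3 b4 : F) :
  mkv a0 a1 a2 a3 a4 = mkv b0 b1 b2 b3 b4 ->
  [/\ a0 = b0, a1 = b1, a2 = b2, a3 = b3 & a4 = b4].
Proof.
move=> e.
have E (i : 'I_5) : mkv a0 a1 a2 a3 a4 i 0 = mkv b0 b1 b2 b3 b4 i 0 by rewrite e.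
have := E (@Ordinal 5 0 isT); have := E (@Ordinal 5 1 isT); have := E (@Ordinal 5 2 isT);
have := E (@Ordinal 5 3 isT); have := E (@Ordinal 5 4 isT); rewrite !mxE /=.
by [].
Qed.

Lemma mkv_lin (F : finFieldType) (s t a0 a1 a2 a3 a4 b0 b1 b2 b3 b4 : F) :
  s *: mkv a0 a1 a2 a3 a4 + t *: mkv b0 b1 b2 b3 b4 =
  mkv (s*a0 + t*b0) (s*a1 + t*b1) (s*a2 + t*b2) (s*a3 + t*b3) (s*a4 + t*b4).
Proof.
apply/matrixP => i j; rewrite !mxE.
by case: i => [[|[|[|[|[|i]]]]] Hi].
Qed.

Lemma mkv0 (F : finFieldType) : mkv 0 0 0 0 0 = 0 :> 'cV[F]_5.
Proof.
apply/matrixP => i j; rewrite !mxE.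
by case: i => [[|[|[|[|[|i]]]]] Hi].
Qed.

Lemma sq_inj (F : finFieldType) (x y : F) : (2%:R : F) = 0 -> x ^+ 2 = y ^+ 2 -> x = y.
Proof.
move=> h2 e.
have : (x + y) ^+ 2 = 0.
  have -> : (x + y) ^+ 2 = (x ^+ 2 - y ^+ 2) + 2%:R * (y ^+ 2 + x * y) by ring.
  by rewrite e subrr h2 mul0r addr0.
move/eqP; rewrite expf_eq0 /= addr_eq0 => /eqP ->.
have -> : - y = y + - (2%:R * y) by ring.
by rewrite h2 mul0r oppr0 addr0.
Qed.

Lemma noroot (F : finFieldType) (alpha : F) :
  irreducible_poly ('X^2 + 'X + alpha%:P) -> forall k : F, k ^+ 2 + k + alpha != 0.
Proof.
move=> [Hs Hirr] k; apply/negP => /eqP Hk.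
have hr : root ('X^2 + 'X + alpha%:P) k.
  by rewrite /root !hornerE Hk.
have hd : ('X - k%:P) %| ('X^2 + 'X + alpha%:P) by rewrite dvdp_XsubCl.
have := Hirr _ _ hd; rewrite size_XsubC => /(_ isT) /eqp_size.
rewrite size_XsubC.
have -> : size ('X^2 + 'X + alpha%:P : {poly F}) = 3%N.
  by rewrite -addrA size_addl ?size_polyXn // size_XaddC.
by [].
Qed.

Lemma normnz (F : finFieldType) (alpha x3 x4 : F) :
  irreducible_poly ('X^2 + 'X + alpha%:P) -> (x3 != 0) || (x4 != 0) ->
  x3 ^+ 2 + x3 * x4 + alpha * x4 ^+ 2 != 0.
Proof.
move=> Hi.
have [->|x4n0] := eqVneq x4 0 => H.
  by move: H; rewrite orbF mulr0 expr0n /= mulr0 !addr0 => H; apply: expf_neq0.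
have := noroot Hi (x3 / x4).
apply: contra => /eqP e; apply/eqP.
have -> : (x3 / x4) ^+ 2 + x3 / x4 + alpha =
  (x3 ^+ 2 + x3 * x4 + alpha * x4 ^+ 2) / x4 ^+ 2 by field.
by rewrite e mul0r.
Qed.

Definition nrm (F : finFieldType) (alpha c d : F) := c ^+ 2 + c * d + alpha * d ^+ 2.

Lemma inv_id (F : finFieldType) (alpha a b c d x1 x2 x3 x4 : F) :
  (2%:R : F) = 0 -> a != 0 -> nrm alpha c d = 1 ->
  (a*c*x1 + alpha*a*d*x2 + b*c*x3 + alpha*b*d*x4) * (a^-1*d*x3 + a^-1*(c+d)*x4)
  + (a*d*x1 + a*(c+d)*x2 + b*d*x3 + b*(c+d)*x4) * (a^-1*c*x3 + alpha*a^-1*d*x4)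
  = x1 * x4 + x2 * x3.
Proof.
move=> h2 an0 hN.
set ai := a^-1.
have aiE : ai = a^-1 by []. clearbody ai.
have E : (a*c*x1 + alpha*a*d*x2 + b*c*x3 + alpha*b*d*x4) * (ai*d*x3 + ai*(c+d)*x4)
  + (a*d*x1 + a*(c+d)*x2 + b*d*x3 + b*(c+d)*x4) * (ai*c*x3 + alpha*ai*d*x4)
  = nrm alpha c d * (a * ai) * (x1 * x4 + x2 * x3) + 2%:R *
  (a*ai*c*d*x1*x3 + a*ai*alpha*c*d*x2*x4 + a*ai*alpha*d^+2*x2*x4 + ai*b*c*d*x3^+2 + ai*b*c^+2*x3*x4 + ai*b*c*d*x3*x4 + ai*alpha*b*d^+2*x3*x4 + ai*alpha*b*c*d*x4^+2 + ai*alpha*b*d^+2*x4^+2).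
  by rewrite /nrm; ring.
by rewrite E h2 mul0r addr0 hN mul1r aiE mulfV // mul1r.
Qed.

Lemma elim2 (F : finFieldType) (alpha x3 x4 P Q : F) :
  (2%:R : F) = 0 -> nrm alpha x3 x4 != 0 ->
  x3 * P + alpha * x4 * Q = 0 -> x4 * P + (x3 + x4) * Q = 0 -> P = 0 /\ Q = 0.
Proof.
move=> h2 hN e1 e2.
have EP : nrm alpha x3 x4 * P = (x3 + x4) * (x3 * P + alpha * x4 * Q)
   - alpha * x4 * (x4 * P + (x3 + x4) * Q) + 2%:R * (alpha * x4 ^+ 2 * P).
  by rewrite /nrm; ring.
have EQ : nrm alpha x3 x4 * Q = x3 * (x4 * P + (x3 + x4) * Q)
   - x4 * (x3 * P + alpha * x4 * Q) + 2%:R * (alpha * x4 ^+ 2 * Q).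
  by rewrite /nrm; ring.
rewrite e1 e2 h2 !mulr0 !mul0r subrr !addr0 in EP EQ.
by split; apply/eqP; [move/eqP: EP|move/eqP: EQ]; rewrite mulf_eq0 (negbTE hN).
Qed.

Lemma freeG (F : finFieldType) (alpha a1 b1 c1 d1 a2 b2 c2 d2 x1 x2 x3 x4 : F) :
  (2%:R : F) = 0 -> irreducible_poly ('X^2 + 'X + alpha%:P) ->
  a1 != 0 -> a2 != 0 -> nrm alpha c1 d1 = 1 -> nrm alpha c2 d2 = 1 ->
  (x3 != 0) || (x4 != 0) ->
  a1*c1*x1 + alpha*a1*d1*x2 + b1*c1*x3 + alpha*b1*d1*x4 =
  a2*c2*x1 + alpha*a2*d2*x2 + b2*c2*x3 + alpha*b2*d2*x4 ->
  a1*d1*x1 + a1*(c1+d1)*x2 + b1*d1*x3 + b1*(c1+d1)*x4 =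
  a2*d2*x1 + a2*(c2+d2)*x2 + b2*d2*x3 + b2*(c2+d2)*x4 ->
  a1^-1*c1*x3 + alpha*a1^-1*d1*x4 = a2^-1*c2*x3 + alpha*a2^-1*d2*x4 ->
  a1^-1*d1*x3 + a1^-1*(c1+d1)*x4 = a2^-1*d2*x3 + a2^-1*(c2+d2)*x4 ->
  [/\ a1 = a2, b1 = b2, c1 = c2 & d1 = d2].
Proof.
move=> h2 Hi a1n0 a2n0 N1 N2 hx r1 r2 r3 r4.
have hN : nrm alpha x3 x4 != 0 by exact: normnz.
have [P0 Q0] : a1^-1 * c1 - a2^-1 * c2 = 0 /\ a1^-1 * d1 - a2^-1 * d2 = 0.
  apply: (elim2 h2 hN).
    have -> : x3 * (a1^-1 * c1 - a2^-1 * c2) + alpha * x4 * (a1^-1 * d1 - a2^-1 * d2) =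
      (a1^-1*c1*x3 + alpha*a1^-1*d1*x4) - (a2^-1*c2*x3 + alpha*a2^-1*d2*x4) by ring.
    by rewrite r3 subrr.
  have -> : x4 * (a1^-1 * c1 - a2^-1 * c2) + (x3 + x4) * (a1^-1 * d1 - a2^-1 * d2) =
      (a1^-1*d1*x3 + a1^-1*(c1+d1)*x4) - (a2^-1*d2*x3 + a2^-1*(c2+d2)*x4) by ring.
  by rewrite r4 subrr.
move/eqP: P0; rewrite subr_eq0 => /eqP P0; move/eqP: Q0; rewrite subr_eq0 => /eqP Q0.
set mu := a1 / a2.
have ec : c1 = mu * c2.
  by rewrite /mu -[c1](mulVKf a1n0) P0; field.
have ed : d1 = mu * d2.
  by rewrite /mu -[d1](mulVKf a1n0) Q0; field.
have mu1 : mu = 1.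
  apply: (sq_inj h2); rewrite expr1n.
  by rewrite -N1 /nrm ec ed -[mu ^+ 2]mulr1 -N2 /nrm; ring.
have ea : a1 = a2.
  by rewrite -[a1](divfK a2n0) -/mu mu1 mul1r.
rewrite mu1 !mul1r in ec ed; subst a2 c2 d2.
split => //.
set del := b1 - b2.
have [D1 D2] : del * c1 = 0 /\ del * d1 = 0.
  apply: (elim2 h2 hN).
    have -> : x3 * (del * c1) + alpha * x4 * (del * d1) =
      (a1*c1*x1 + alpha*a1*d1*x2 + b1*c1*x3 + alpha*b1*d1*x4) -
      (a1*c1*x1 + alpha*a1*d1*x2 + b2*c1*x3 + alpha*b2*d1*x4) by rewrite /del; ring.
    by rewrite r1 subrr.
  have -> : x4 * (del * c1) + (x3 + x4) * (del * d1) =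
      (a1*d1*x1 + a1*(c1+d1)*x2 + b1*d1*x3 + b1*(c1+d1)*x4) -
      (a1*d1*x1 + a1*(c1+d1)*x2 + b2*d1*x3 + b2*(c1+d1)*x4) by rewrite /del; ring.
  by rewrite r2 subrr.
have : del ^+ 2 = 0 ^+ 2.
  rewrite expr0n /= -[del ^+ 2]mulr1 -N1 /nrm.
  have -> : del ^+ 2 * (c1 ^+ 2 + c1 * d1 + alpha * d1 ^+ 2) =
    (del * c1) ^+ 2 + (del * c1) * (del * d1) + alpha * (del * d1) ^+ 2 by ring.
  by rewrite D1 D2 expr0n /= !mul0r !mulr0 !addr0.
move/(sq_inj h2)/eqP; rewrite subr_eq0 => /eqP.
by [].
Qed.

Lemma inGP (F : finFieldType) (alpha : F) (M : 'M[F]_5) :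
  M \in Ggroup alpha ->
  exists a b c d, [/\ a != 0, nrm alpha c d = 1 & M = Mabcd alpha a b c d].
Proof.
rewrite inE => /existsP [a /existsP [b /existsP [c /existsP [d /and3P [an0 /eqP hN /eqP ->]]]]].
by exists a, b, c, d.
Qed.

Lemma Gin (F : finFieldType) (alpha a b c d : F) :
  a != 0 -> nrm alpha c d = 1 -> Mabcd alpha a b c d \in Ggroup alpha.
Proof.
move=> an0 hN; rewrite inE; apply/existsP; exists a; apply/existsP; exists b;
apply/existsP; exists c; apply/existsP; exists d.
by rewrite an0 /=; apply/andP; split; apply/eqP.
Qed.

Definition uu (F : finFieldType) (p r : F) := mkv 1 p 0 0 r.
Definition vv (F : finFieldType) := mkv 0 0 1 1 (0 : F).
Definition Lset (F : finFieldType) (p r : F) : {set 'cV[F]_5} :=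
  [set a *: uu p r + b *: vv F | a : F, b : F].

Lemma LsetP (F : finFieldType) (p r : F) y :
  y \in Lset p r -> exists s t, y = mkv s (s * p) t t (s * r).
Proof.
case/imset2P => s t _ _ ->; exists s, t.
by rewrite /uu /vv mkv_lin !mulr1 !mulr0 !addr0 !add0r.
Qed.

Lemma key (F : finFieldType) (alpha p r : F) M1 M2 y1 y2 :
  (2%:R : F) = 0 -> irreducible_poly ('X^2 + 'X + alpha%:P) -> r != 0 ->
  M1 \in Ggroup alpha -> M2 \in Ggroup alpha -> y1 \in Lset p r -> y2 \in Lset p r ->
  M1 *m y1 = M2 *m y2 -> M1 *m y1 != 0 -> M1 = M2.
Proof.
move=> h2 Hi rn0 /inGP [a1 [b1 [c1 [d1 [a1n0 N1 ->]]]]] /inGP [a2 [b2 [c2 [d2 [a2n0 N2 ->]]]]].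
move=> /LsetP [s1 [t1 ->]] /LsetP [s2 [t2 ->]].
rewrite !mulM => E nz.
have [e0 e1 e2 e3 e4] := mkv_inj E; subst s2.
have I1 := @inv_id F alpha a1 b1 c1 d1 (s1 * p) t1 t1 (s1 * r) h2 a1n0 N1.
have I2 := @inv_id F alpha a2 b2 c2 d2 (s1 * p) t2 t2 (s1 * r) h2 a2n0 N2.
rewrite e1 e2 e3 e4 I2 in I1.
move/addrI: I1 => /esym tt; have {tt} : t1 ^+ 2 = t2 ^+ 2 by rewrite !expr2.
move/(sq_inj h2) => et; subst t2.
have hx : (t1 != 0) || (s1 * r != 0).
  rewrite -negb_and; apply/negP => /andP [/eqP t0]; rewrite mulf_eq0 (negbTE rn0) orbF => /eqP s0.
  by move: nz; rewrite t0 s0 !mul0r !mulr0 !addr0 mkv0 eqxx.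
have [-> -> -> ->] := @freeG F alpha a1 b1 c1 d1 a2 b2 c2 d2 (s1 * p) t1 t1 (s1 * r) h2 Hi a1n0 a2n0 N1 N2 hx e1 e2 e3 e4.
by [].
Qed.

Lemma M1E (F : finFieldType) (alpha : F) : Mabcd alpha 1 0 1 0 = 1%:M.
Proof.
apply/matrixP => i j; rewrite !mxE.
case: i => [[|[|[|[|[|i]]]]] Hi] //; case: j => [[|[|[|[|[|j]]]]] Hj] //=;
  rewrite ?invr1; ring.
Qed.

Lemma rank_uv (F : finFieldType) (p r : F) : \rank (row_mx (uu p r) (vv F)) = 2%N.
Proof.
apply/eqP; rewrite eqn_leq rank_leq_col /=.
pose P : 'M[F]_(2, 5) := \matrix_(i < 2, j < 5) ((j : nat) == (if (i : nat) == 0%N then 0 else 2)%N)%:R.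
have E : P *m row_mx (uu p r) (vv F) = 1%:M.
  apply/matrixP => i j.
  have [-> | ->] : j = lshift 1 ord0 \/ j = rshift 1 ord0.
    by case: j => [[|[|j]] Hj] //; [left|right]; apply/val_inj.
  1,2: rewrite !mxE !big_ord_recl big_ord0 ?row_mxEl ?row_mxEr ?mxE.
  1,2: case: i => [[|[|i]] Hi] //=; rewrite ?mxE /=; ring.
by rewrite -[X in (X <= _)%N](mxrank1 F 2) -E mxrankM_maxr.
Qed.

Definition conic (F : finFieldType) (alpha : F) : {set F * F} :=
  [set cd | nrm alpha cd.1 cd.2 == 1].

Definition cpar (F : finFieldType) (alpha : F) (o : option F) : F * F :=
  match o with
  | None => (1, 0)
  | Some k => (1 + k * (k ^+ 2 + k + alpha)^-1, (k ^+ 2 + k + alpha)^-1)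
  end.

Lemma card_conic (F : finFieldType) (alpha : F) :
  (2%:R : F) = 0 -> irreducible_poly ('X^2 + 'X + alpha%:P) ->
  #|conic alpha| = (#|F| + 1)%N.
Proof.
move=> h2 Hi.
have inj : injective (cpar alpha).
  case=> [k|] [k'|] //=.
  - move=> [e1 e2].
    have sn0 : (k' ^+ 2 + k' + alpha)^-1 != 0 by rewrite invr_eq0 noroot.
    by move: e1; rewrite e2 => /addrI /(mulIf sn0) ->.
  - by case=> _ /eqP; rewrite invr_eq0 (negbTE (noroot Hi k)).
  - by case=> _ /esym/eqP; rewrite invr_eq0 (negbTE (noroot Hi k')).
have -> : conic alpha = cpar alpha @: setT.
  apply/setP => [[c d]]; rewrite inE /=; apply/eqP/imsetP.
  - move=> hN.
    have [d0|dn0] := eqVneq d 0.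
      exists None => //=; subst d; congr (_, _).
      apply: (sq_inj h2); rewrite expr1n -hN /nrm; ring.
    exists (Some ((c + 1) / d)) => //=.
    set k := (c + 1) / d.
    have E : (k ^+ 2 + k + alpha) * d ^+ 2 = d.
      have -> : (k ^+ 2 + k + alpha) * d ^+ 2 = (nrm alpha c d - 1) + d + 2%:R * (c + 1).
        by rewrite /k /nrm; field.
      by rewrite hN subrr h2 mul0r addr0 add0r.
    have E' : k ^+ 2 + k + alpha = d^-1.
      by apply: (mulIf (expf_neq0 2 dn0)); rewrite E; field.
    rewrite E' invrK /k mulfVK //.
    congr (_, _); have -> : 1 + (c + 1) = c + 2%:R by ring.
    by rewrite h2 addr0.
  - case=> [[k|]] _ [-> ->] /=.
      set s := (k ^+ 2 + k + alpha)^-1.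
      have sk : s * (k ^+ 2 + k + alpha) = 1 by rewrite mulVf // noroot.
      have -> : nrm alpha (1 + k * s) s = 1 + s * (s * (k ^+ 2 + k + alpha) - 1) + 2%:R * (k * s + s).
        by rewrite /nrm; ring.
      by rewrite sk subrr mulr0 h2 mul0r !addr0.
    by rewrite /nrm; ring.
rewrite card_imset // cardsT card_option ?addn1.
by congr (_.+1); apply: eq_card.
Qed.

Lemma cardG (F : finFieldType) (alpha : F) :
  (2%:R : F) = 0 -> irreducible_poly ('X^2 + 'X + alpha%:P) ->
  #|Ggroup alpha| = ((#|F| - 1) * #|F| * (#|F| + 1))%N.
Proof.
move=> h2 Hi.
pose S := setX (setX [set a : F | a != 0] [set: F]) (conic alpha).
pose f := fun x : (F * F) * (F * F) => Mabcd alpha x.1.1 x.1.2 x.2.1 x.2.2.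
have -> : Ggroup alpha = f @: S.
  apply/setP => M; apply/idP/imsetP.
    move=> /inGP [a [b [c [d [an0 hN ->]]]]].
    by exists ((a, b), (c, d)) => //; rewrite !inE /= an0 hN eqxx.
  case=> [[[a b] [c d]]] hS ->; rewrite !inE /= in hS.
  case/andP: hS => /andP [an0 _] /eqP hN.
  exact: Gin.
rewrite card_in_imset.
  rewrite !cardsX cardsT card_conic //.
  have -> : [set a : F | a != 0] = [set~ 0] by apply/setP => x; rewrite !inE.
  by rewrite cardsC1 subn1.
move=> [[a1 b1] [c1 d1]] [[a2 b2] [c2 d2]]; rewrite !inE /=.
move=> /andP [/andP [a1n0 _] /eqP N1] /andP [/andP [a2n0 _] /eqP N2] E.
have := congr1 (fun M => M *m mkv 0 0 0 1 0) E; rewrite /f /= !mulM.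
move=> /mkv_inj [_ e1 e2 e3 e4].
have hx : ((1 : F) != 0) || ((0 : F) != 0) by rewrite oner_neq0.
by have [-> -> -> ->] := @freeG F alpha a1 b1 c1 d1 a2 b2 c2 d2 0 0 1 0 h2 Hi a1n0 a2n0 N1 N2 hx e1 e2 e3 e4.
Qed.

Lemma act1 (F : finFieldType) (S : {set 'cV[F]_5}) : act_line 1%:M S = S.
Proof.
rewrite /act_line; under eq_imset do rewrite mul1mx.
by rewrite imset_id.
Qed.

Lemma uu_in (F : finFieldType) (p r : F) : uu p r \in Lset p r.
Proof. by apply/imset2P; exists 1 0; rewrite ?inE // scale1r scale0r addr0. Qed.

Lemma vv_in (F : finFieldType) (p r : F) : vv F \in Lset p r.
Proof. by apply/imset2P; exists 0 1; rewrite ?inE // scale1r scale0r add0r. Qed.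

Lemma zero_in (F : finFieldType) (p r : F) : 0 \in Lset p r.
Proof. by apply/imset2P; exists 0 0; rewrite ?inE // !scale0r addr0. Qed.

Lemma vv_nz (F : finFieldType) : vv F != 0.
Proof. by apply/eqP; rewrite -mkv0 => /mkv_inj [_ _ /eqP]; rewrite oner_eq0. Qed.

Lemma uu_nz (F : finFieldType) (alpha p r : F) M :
  M \in Ggroup alpha -> M *m uu p r != 0.
Proof.
move=> /inGP [a [b [c [d [_ _ ->]]]]]; rewrite /uu mulM.
by apply/eqP; rewrite -mkv0 => /mkv_inj [/eqP]; rewrite oner_eq0.
Qed.

Lemma act_inj (F : finFieldType) (alpha p r : F) M1 M2 :
  (2%:R : F) = 0 -> irreducible_poly ('X^2 + 'X + alpha%:P) -> r != 0 ->
  M1 \in Ggroup alpha -> M2 \in Ggroup alpha ->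
  act_line M1 (Lset p r) = act_line M2 (Lset p r) -> M1 = M2.
Proof.
move=> h2 Hi rn0 h1 h2' E.
have : M1 *m uu p r \in act_line M2 (Lset p r) by rewrite -E; apply: imset_f; exact: uu_in.
case/imsetP => y hy e.
exact: (key h2 Hi rn0 h1 h2' (uu_in p r) hy e (uu_nz p r h1)).
Qed.

Lemma orbit_card (F : finFieldType) (alpha p r : F) :
  (2%:R : F) = 0 -> irreducible_poly ('X^2 + 'X + alpha%:P) -> r != 0 ->
  #|line_orbit (Ggroup alpha) (Lset p r)| = #|Ggroup alpha|.
Proof.
move=> h2 Hi rn0; rewrite card_in_imset // => M1 M2 h1 h2'.
exact: (act_inj h2 Hi rn0 h1 h2').
Qed.

Lemma disj (F : finFieldType) (alpha p r : F) M1 M2 :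
  (2%:R : F) = 0 -> irreducible_poly ('X^2 + 'X + alpha%:P) -> r != 0 ->
  M1 \in Ggroup alpha -> M2 \in Ggroup alpha ->
  act_line M1 (Lset p r) != act_line M2 (Lset p r) ->
  disjoint_lines (act_line M1 (Lset p r)) (act_line M2 (Lset p r)).
Proof.
move=> h2 Hi rn0 h1 h2' neq; rewrite /disjoint_lines.
apply/setP => x; rewrite inE in_set1; apply/andP/eqP.
  case=> /imsetP [y1 hy1 ->] /imsetP [y2 hy2 e].
  apply/eqP; apply: contraR neq => nz.
  by rewrite (key h2 Hi rn0 h1 h2' hy1 hy2 e nz).
move=> ->; split; apply/imsetP; exists 0; rewrite ?mulmx0 //; exact: zero_in.
Qed.

Lemma orbit_distinct (F : finFieldType) (alpha p r p' r' : F) :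
  (2%:R : F) = 0 -> irreducible_poly ('X^2 + 'X + alpha%:P) -> r != 0 ->
  line_orbit (Ggroup alpha) (Lset p r) = line_orbit (Ggroup alpha) (Lset p' r') ->
  (p, r) = (p', r').
Proof.
move=> h2 Hi rn0 E.
have G1 : 1%:M \in Ggroup alpha by rewrite -(M1E alpha); apply: Gin; rewrite ?oner_neq0 // /nrm; ring.
have : Lset p' r' \in line_orbit (Ggroup alpha) (Lset p r).
  by rewrite E; apply/imsetP; exists 1%:M => //; rewrite act1.
case/imsetP => M hM eL.
have : vv F \in act_line M (Lset p r) by rewrite -eL; exact: vv_in.
case/imsetP => y hy e.
have eM : M = 1%:M.
  apply: (key h2 Hi rn0 hM G1 hy (vv_in p r)); first by rewrite -e mul1mx.
  by rewrite -e vv_nz.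
rewrite eM act1 in eL.
have := uu_in p' r'; rewrite eL => /LsetP [s [t]].
by rewrite /uu => /mkv_inj [<- e1 <- _]; rewrite !mul1r => ->; rewrite e1 mul1r.
Qed.

Unset Implicit Arguments.
Theorem proposition3p4 (h : nat) (F : finFieldType) (alpha : F) :
  (0 < h)%N -> #|F| = (2 ^ h)%N ->
  irreducible_poly ('X^2 + 'X + alpha%:P) ->
  exists Os : {set {set {set 'cV[F]_5}}},
    #|Os| = ((2 ^ h) ^ 2 - 2 ^ h)%N /\
    forall O, O \in Os ->
      (exists L, is_line L /\ O = line_orbit (Ggroup alpha) L) /\
      #|O| = ((2 ^ h) ^ 3 - 2 ^ h)%N /\
      (forall L1 L2, L1 \in O -> L2 \in O -> L1 != L2 -> disjoint_lines L1 L2).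
Proof.
move=> h0 hF Hi.
have h2 := char2 hF.
have q0 : (0 < 2 ^ h)%N by rewrite expn_gt0.
exists [set line_orbit (Ggroup alpha) (Lset pr.1 pr.2) | pr in [set pr : F * F | pr.2 != 0]].
split.
  rewrite card_in_imset.
    have -> : [set pr : F * F | pr.2 != 0] = setX [set: F] [set~ 0].
      by apply/setP => [[x y]]; rewrite !inE.
    rewrite cardsX cardsT cardsC1 hF.
    move: q0; move: (2 ^ h)%N => q hq.
    rewrite !expnS expn0 muln1 -subn1. nia.
  move=> [p r] [p' r']; rewrite inE /= => hr _ E.
  exact: (orbit_distinct h2 Hi hr E).
move=> O /imsetP [[p r]]; rewrite inE /= => hr ->.
split; first by exists (Lset p r); split => //; exists (uu p r), (vv F); split => //; exact: rank_uv.
split.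
  rewrite orbit_card // cardG // hF.
  move: q0; move: (2 ^ h)%N => q hq.
  rewrite !expnS expn0 muln1. nia.
move=> L1 L2 /imsetP [M1 hM1 ->] /imsetP [M2 hM2 ->] neq.
exact: (disj h2 Hi hr hM1 hM2 neq).
Qed.
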